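(* Let $R$ be a ring, $n\in\mathbb{N}$, and suppose $a\in R$ can be written $a=e+v$ with $e^2=e$, $v$ a unit of $R$, $v^n=1$ and $ev=ve$. Then $(a^n-1)((a-1)^n-1)=0$.
   Context: All rings are associative with identity. *)

(* Defs.v *)
From mathcomp Require Import all_boot all_algebra.
Set Implicit Arguments. Unset Strict Implicit. Unset Printing Implicit Defensive.

(* Main.v *)
Require Import Defs.
From mathcomp Require Import all_boot all_algebra.
Import GRing.Theory.
Local Open Scope ring_scope.
Lemma idem_pow (R : pzRingType) (e w : R) (n : nat) : e * e = e -> e * w = w * e ->
  (e + w) ^+ n = w ^+ n + e * ((1 + w) ^+ n - w ^+ n).
Proof.
move=> ee ew; elim: n => [|n IH]; first by rewrite !expr0 subrr mulr0 addr0.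
rewrite exprS IH (exprS (1 + w)) (exprS w).
set c := (1 + w) ^+ n; set d := w ^+ n.
rewrite mulrDl !mulrDr !mulrA ee -ew.
rewrite mulrDr mulr1 mulrDl !mulrN !mulrA.
rewrite (addrC (e*c)) addNKr addrCA; congr (_ + _).
by rewrite addrA.
Qed.
Theorem lemma2p1 (R : unitRingType) (n : nat) (a e v : R) :
  a = e + v -> e * e = e -> v \is a GRing.unit -> v ^+ n = 1 -> e * v = v * e ->
  (a ^+ n - 1) * ((a - 1) ^+ n - 1) = 0.
Proof.
move=> -> ee _ vn ev.
have h1 := @idem_pow _ _ _ n ee ev.
have ev1 : e * (v - 1) = (v - 1) * e by rewrite mulrBr mulrBl mulr1 mul1r ev.
have h2 := @idem_pow _ _ _ n ee ev1.
rewrite -addrA h2 h1 vn addrC addKr.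
rewrite (addrC 1 (v - 1)) subrK vn.
have -> : (v - 1) ^+ n + e * (1 - (v - 1) ^+ n) - 1 = (1 - e) * ((v - 1) ^+ n - 1).
  by rewrite mulrBl mul1r -mulrN opprB addrAC.
set X := (1 + v) ^+ n - 1.
have eX : X * (1 - e) = (1 - e) * X.
  have cX : GRing.comm e X.
    rewrite /X; apply: commrB; last exact: commr1.
    apply: commrX; apply: commrD; first exact: commr1.
    exact: ev.
  apply: (commrB (commr1 X)); exact: commr_sym.
by rewrite mulrA -(mulrA e) eX !mulrA (mulrBr e) mulr1 ee subrr !mul0r.
Qed.
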